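(* Let $k$ be a commutative ring, $H$ a Hopf algebra over $k$ with bijective antipode $S$ (inverse $\overline{S}$), and $A$ a right $H$-comodule algebra. Then there is an isomorphism of categories $\gamma:\ \mathcal{C}'_A\to\mathcal{C}_A$ which is the identity on objects and is given on morphisms by $\gamma(f')=f'\circ S$; in particular $f'\circ S\in\mathcal{C}_A(\mathbf{i},\mathbf{j})$ for every $f'\in\mathcal{C}'_A(\mathbf{i},\mathbf{j})$, $\gamma(g'\star f')=\gamma(g')*\gamma(f')$, and the inverse functor is $f\mapsto f\circ\overline{S}$.
   Context: Sweedler notation: $\Delta(h)=h_{(1)}\otimes h_{(2)}$, and for a right $H$-comodule, $\rho(a)=a_{[0]}\otimes a_{[1]}$. A right $H$-comodule algebra is an algebra $A$ with a right $H$-coaction $\rho$ that is an algebra map. Let $B=A^{\mathrm{co}H}=\{a\in A:\rho(a)=a\otimes 1\}$. The category $\mathcal{C}_A$ has two objects $\mathbf{1},\mathbf{2}$; writing $\mathcal{C}_A(\mathbf{i},\mathbf{j})$ for the morphisms from $\mathbf{i}$ to $\mathbf{j}$, all of them sets of $k$-linear maps $H\to A$: $\mathcal{C}_A(\mathbf{1},\mathbf{1})=\{v:\rho(v(h))=v(h)\otimes 1\}=\mathrm{Hom}(H,B)$; $\mathcal{C}_A(\mathbf{2},\mathbf{1})=\{t:\rho(t(h))=t(h_{(1)})\otimes h_{(2)}\}=\mathrm{Hom}^H(H,A)$; $\mathcal{C}_A(\mathbf{1},\mathbf{2})=\{u:\rho(u(h))=u(h_{(2)})\otimes S(h_{(1)})\}$;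 $\mathcal{C}_A(\mathbf{2},\mathbf{2})=\{w:\rho(w(h))=w(h_{(2)})\otimes S(h_{(1)})h_{(3)}\}$ (all conditions for all $h\in H$). Composition of $f:\mathbf{i}\to\mathbf{j}$ and $g:\mathbf{j}\to\mathbf{k}$ is the convolution $g*f$, $(g*f)(h)=g(h_{(1)})f(h_{(2)})$; identities are $h\mapsto\varepsilon(h)1_A$. The category $\mathcal{C}'_A$ has objects $\mathbf{1},\mathbf{2}$ and morphism sets of $k$-linear maps $H\to A$: $\mathcal{C}'_A(\mathbf{1},\mathbf{1})=\mathrm{Hom}(H,B)$; $\mathcal{C}'_A(\mathbf{1},\mathbf{2})=\{t':\rho(t'(h))=t'(h_{(1)})\otimes h_{(2)}\}=\mathrm{Hom}^H(H,A)$; $\mathcal{C}'_A(\mathbf{2},\mathbf{1})=\{u':\rho(u'(h))=u'(h_{(2)})\otimes \overline{S}(h_{(1)})\}$; $\mathcal{C}'_A(\mathbf{2},\mathbf{2})=\{w':\rho(w'(h))=w'(h_{(2)})\otimes h_{(3)}\overline{S}(h_{(1)})\}$; composition of $f':\mathbf{i}\to\mathbf{j}$ and $g':\mathbf{j}\to\mathbf{k}$ is $g'\star f'$, $(g'\star f')(h)=g'(h_{(2)})f'(h_{(1)})$. *)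

(* Defs.v *)
From HB Require Import structures.
From mathcomp Require Import all_boot all_order all_algebra.
Set Implicit Arguments. Unset Strict Implicit. Unset Printing Implicit Defensive.
Import GRing.Theory.
Local Open Scope ring_scope.

Section Defs.
Variable k : comNzRingType.

Definition klinear (X Y : lmodType k) (f : X -> Y) : Prop :=
  forall (a : k) (x y : X), f (a *: x + y) = a *: f x + f y.

Definition kbilinear (X Y M : lmodType k) (b : X -> Y -> M) : Prop :=
  (forall y, klinear (fun x => b x y)) /\ (forall x, klinear (b x)).

Definition ktrilinear (X Y Z M : lmodType k) (b : X -> Y -> Z -> M) : Prop :=
  (forall y z, klinear (fun x => b x y z)) /\ (forall x z, klinear (fun y => b x y z))
  /\ (forall x y, klinear (b x y)).

(* A finite formal sum [:: (x_1,y_1); ...] represents sum_i x_i (x) y_i in X (x)_k Y.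
   Two such sums are equal in X (x)_k Y iff they agree under every k-bilinear map
   (universal property of the tensor product). *)
Definition teq2 (X Y : lmodType k) (s t : seq (X * Y)) : Prop :=
  forall (M : lmodType k) (b : X -> Y -> M), kbilinear b ->
    \sum_(p <- s) b p.1 p.2 = \sum_(p <- t) b p.1 p.2.

Definition teq3 (X Y Z : lmodType k) (s t : seq (X * Y * Z)) : Prop :=
  forall (M : lmodType k) (b : X -> Y -> Z -> M), ktrilinear b ->
    \sum_(p <- s) b p.1.1 p.1.2 p.2 = \sum_(p <- t) b p.1.1 p.1.2 p.2.

Variable H : algType k.
(* D h is a chosen representative of Delta(h) = h_(1) (x) h_(2) *)
Variable D : H -> seq (H * H).
Variable eps : H -> k.
Variable S : H -> H.

Definition D3 (h : H) : seq (H * H * H) :=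
  flatten [seq [seq (q.1, q.2, p.2) | q <- D p.1] | p <- D h].

Definition is_hopf : Prop :=
  [/\
      (forall (a : k) (g h : H),
         teq2 (D (a *: g + h)) ([seq (a *: p.1, p.2) | p <- D g] ++ D h)),
      (forall h, teq3 (D3 h)
         (flatten [seq [seq (p.1, q.1, q.2) | q <- D p.2] | p <- D h])),
      (forall h, (\sum_(p <- D h) eps p.1 *: p.2 = h) /\ (\sum_(p <- D h) eps p.2 *: p.1 = h)),
      ((forall g h, teq2 (D (g * h)) [seq (p.1 * q.1, p.2 * q.2) | p <- D g, q <- D h])
        /\ teq2 (D 1) [:: (1, 1)]) &
      (
      (klinear (eps : H -> k^o) /\ (forall g h, eps (g * h) = eps g * eps h) /\ eps 1 = 1) /\
      (klinear S /\
      (forall h, (\sum_(p <- D h) S p.1 * p.2 = eps h *: 1)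
              /\ (\sum_(p <- D h) p.1 * S p.2 = eps h *: 1))))].

Variable A : algType k.
Variable rho : A -> seq (A * H).

Definition is_comodule_algebra : Prop :=
  [/\ (forall (a : k) (x y : A),
         teq2 (rho (a *: x + y)) ([seq (a *: p.1, p.2) | p <- rho x] ++ rho y)),
      (forall x, teq3
         (flatten [seq [seq (q.1, q.2, p.2) | q <- rho p.1] | p <- rho x])
         (flatten [seq [seq (p.1, q.1, q.2) | q <- D p.2] | p <- rho x])),
      (forall x, \sum_(p <- rho x) eps p.2 *: p.1 = x),
      (forall x y, teq2 (rho (x * y)) [seq (p.1 * q.1, p.2 * q.2) | p <- rho x, q <- rho y]) &
      teq2 (rho 1) [:: (1, 1)]].

Inductive obj := O1 | O2.

Definition conv (g f : H -> A) (h : H) : A := \sum_(p <- D h) g p.1 * f p.2.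
Definition star (g f : H -> A) (h : H) : A := \sum_(p <- D h) g p.2 * f p.1.
Definition idmor (h : H) : A := eps h *: 1.

Definition Chom (i j : obj) (f : H -> A) : Prop :=
  klinear f /\
  match i, j with
  | O1, O1 => forall h, teq2 (rho (f h)) [:: (f h, 1)]
  | O2, O1 => forall h, teq2 (rho (f h)) [seq (f p.1, p.2) | p <- D h]
  | O1, O2 => forall h, teq2 (rho (f h)) [seq (f p.2, S p.1) | p <- D h]
  | O2, O2 => forall h, teq2 (rho (f h)) [seq (f q.1.2, S q.1.1 * q.2) | q <- D3 h]
  end.

Variable Sb : H -> H.

Definition C'hom (i j : obj) (f : H -> A) : Prop :=
  klinear f /\
  match i, j with
  | O1, O1 => forall h, teq2 (rho (f h)) [:: (f h, 1)]
  | O1, O2 => forall h, teq2 (rho (f h)) [seq (f p.1, p.2) | p <- D h]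
  | O2, O1 => forall h, teq2 (rho (f h)) [seq (f p.2, Sb p.1) | p <- D h]
  | O2, O2 => forall h, teq2 (rho (f h)) [seq (f q.1.2, q.2 * Sb q.1.1) | q <- D3 h]
  end.

End Defs.

(* Main.v *)
Require Import Defs.
From HB Require Import structures.
From mathcomp Require Import all_boot all_order all_algebra.
Import GRing.Theory.
Local Open Scope ring_scope.

Set Implicit Arguments. Unset Strict Implicit. Unset Printing Implicit Defensive.

Section Aux.
Variable k : comNzRingType.
Implicit Types X Y Z M : lmodType k.

Lemma klin0 X Y (f : X -> Y) : klinear f -> f 0 = 0.
Proof.
move=> Hf; have := Hf 1 0 0; rewrite !scale1r addr0 => e.
by apply: (@addrI _ (f 0)); rewrite addr0 -e.
Qed.

Lemma klinD X Y (f : X -> Y) : klinear f -> forall x y, f (x + y) = f x + f y.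
Proof. by move=> Hf x y; have := Hf 1 x y; rewrite !scale1r. Qed.

Lemma klinZ X Y (f : X -> Y) : klinear f -> forall a x, f (a *: x) = a *: f x.
Proof. by move=> Hf a x; have := Hf a x 0; rewrite !addr0 (klin0 Hf) addr0. Qed.

Lemma klin_sum X Y (f : X -> Y) : klinear f ->
  forall I (s : seq I) (F : I -> X), f (\sum_(i <- s) F i) = \sum_(i <- s) f (F i).
Proof.
move=> Hf I s F; elim: s => [|i s IH]; first by rewrite !big_nil (klin0 Hf).
by rewrite !big_cons (klinD Hf) IH.
Qed.

Lemma klin_sumF X Y I (s : seq I) (F : I -> X -> Y) :
  (forall i, klinear (F i)) -> klinear (fun x => \sum_(i <- s) F i x).
Proof.
move=> HF a x y; rewrite scaler_sumr -big_split; apply: eq_bigr => i _.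
by rewrite HF.
Qed.

Lemma klin_comp X Y Z (f : Y -> Z) (g : X -> Y) :
  klinear f -> klinear g -> klinear (fun x => f (g x)).
Proof. by move=> Hf Hg a x y; rewrite Hg Hf. Qed.

Lemma klin_id X : klinear (fun x : X => x).
Proof. by []. Qed.

Lemma klin_mull (A : algType k) (y : A) : klinear (fun x : A => x * y).
Proof. by move=> a x z; rewrite mulrDl scalerAl. Qed.

Lemma klin_mulr (A : algType k) (x : A) : klinear (fun y : A => x * y).
Proof. by move=> a y z; rewrite mulrDr scalerAr. Qed.

Lemma bil1 X Y M (b : X -> Y -> M) : kbilinear b -> forall y, klinear (fun x => b x y).
Proof. by case. Qed.
Lemma bil2 X Y M (b : X -> Y -> M) : kbilinear b -> forall x, klinear (b x).
Proof. by case. Qed.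

End Aux.

Section Hopf.
Variable k : comNzRingType.
Variable H : algType k.
Variable D : H -> seq (H * H).
Variable eps : H -> k.
Variable S : H -> H.
Hypothesis hopf : is_hopf D eps S.
Implicit Types X : lmodType k.

Lemma Dlin X (G : H -> H -> X) : kbilinear G ->
  klinear (fun h => \sum_(p <- D h) G p.1 p.2).
Proof.
case: hopf => Dl _ _ _ _ HG a x y.
rewrite (Dl a x y X G HG) big_cat big_map /=; congr (_ + _).
by rewrite scaler_sumr; apply: eq_bigr => p _; rewrite (klinZ (bil1 HG _)).
Qed.

Lemma coass X (t : H -> H -> H -> X) : ktrilinear t -> forall h,
  \sum_(p <- D h) \sum_(q <- D p.1) t q.1 q.2 p.2 =
  \sum_(p <- D h) \sum_(q <- D p.2) t p.1 q.1 q.2.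
Proof.
case: hopf => _ Co _ _ _ Ht h; have := Co h X t Ht.
rewrite /D3 !big_flatten /= !big_map => e.
transitivity (\sum_(j <- D h) \sum_(i <- [seq (q.1, q.2, j.2) | q <- D j.1]) t i.1.1 i.1.2 i.2).
  by apply: eq_bigr => p _; rewrite big_map.
rewrite e; apply: eq_bigr => p _; by rewrite big_map.
Qed.

Lemma cou1 h : \sum_(p <- D h) eps p.2 *: p.1 = h.
Proof. by case: hopf => _ _ /(_ h) []. Qed.
Lemma cou2 h : \sum_(p <- D h) eps p.1 *: p.2 = h.
Proof. by case: hopf => _ _ /(_ h) []. Qed.

Lemma cou1f X (f : H -> X) : klinear f -> forall h, \sum_(p <- D h) eps p.2 *: f p.1 = f h.
Proof.
by move=> Hf h; rewrite -{2}(cou1 h) (klin_sum Hf); apply: eq_bigr => p _; rewrite (klinZ Hf).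
Qed.
Lemma cou2f X (f : H -> X) : klinear f -> forall h, \sum_(p <- D h) eps p.1 *: f p.2 = f h.
Proof.
by move=> Hf h; rewrite -{2}(cou2 h) (klin_sum Hf); apply: eq_bigr => p _; rewrite (klinZ Hf).
Qed.

Lemma Dmul X (G : H -> H -> X) : kbilinear G -> forall g h,
  \sum_(p <- D (g * h)) G p.1 p.2 = \sum_(p <- D g) \sum_(q <- D h) G (p.1 * q.1) (p.2 * q.2).
Proof.
case: hopf => _ _ _ [Dm _] _ HG g h.
by rewrite (Dm g h X G HG) big_allpairs_dep.
Qed.

Lemma Done X (G : H -> H -> X) : kbilinear G -> \sum_(p <- D 1) G p.1 p.2 = G 1 1.
Proof.
case: hopf => _ _ _ [_ D1] _ HG.
by rewrite (D1 X G HG) big_seq1.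
Qed.

Lemma Slin : klinear S.
Proof. by case: hopf => _ _ _ _ [_ []]. Qed.

Lemma antL h : \sum_(p <- D h) S p.1 * p.2 = eps h *: 1.
Proof. by case: hopf => _ _ _ _ [_ [_ /(_ h) []]]. Qed.
Lemma antR h : \sum_(p <- D h) p.1 * S p.2 = eps h *: 1.
Proof. by case: hopf => _ _ _ _ [_ [_ /(_ h) []]]. Qed.


Lemma L1 X (b : H -> H -> X) : kbilinear b -> forall x,
  \sum_(q <- D x) \sum_(r <- D (S q.1)) \sum_(s <- D q.2) b (r.1 * s.1) (r.2 * s.2)
  = eps x *: b 1 1.
Proof.
move=> Hb x.
transitivity (\sum_(q <- D x) (fun h => \sum_(p <- D h) b p.1 p.2) (S q.1 * q.2)).
  by apply: eq_bigr => q _ /=; rewrite Dmul.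
by rewrite -(klin_sum (Dlin Hb)) antL (klinZ (Dlin Hb)) Done.
Qed.


Lemma linS1 X (b : H -> H -> X) : kbilinear b -> forall (u : H) c,
  klinear (fun y => b (u * S y) c).
Proof. by move=> Hb u c; apply: klin_comp (bil1 Hb _) (klin_comp (klin_mulr _) Slin). Qed.
Lemma linS2 X (b : H -> H -> X) : kbilinear b -> forall (u : H) c,
  klinear (fun y => b c (u * S y)).
Proof. by move=> Hb u c; apply: klin_comp (bil2 Hb _) (klin_comp (klin_mulr _) Slin). Qed.

Lemma L2 X (b : H -> H -> X) : kbilinear b -> forall x,
  \sum_(q <- D x) \sum_(r <- D q.1) \sum_(s <- D q.2) b (r.1 * S s.2) (r.2 * S s.1)
  = eps x *: b 1 1.
Proof.
move=> Hb x.
have Ht : ktrilinear (fun u v w : H => \sum_(s <- D w) b (u * S s.2) (v * S s.1)).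
  split; [|split].
  - move=> v w; apply: klin_sumF => s; exact: klin_comp (bil1 Hb _) (klin_mull _).
  - move=> u w; apply: klin_sumF => s; exact: klin_comp (bil2 Hb _) (klin_mull _).
  - move=> u v; apply: (Dlin (G := fun s1 s2 => b (u * S s2) (v * S s1))).
    split => y; [exact: linS2 | exact: linS1].
apply: etrans (coass Ht x) _.
transitivity (\sum_(q <- D x) b (q.1 * S q.2) 1).
  apply: eq_bigr => q _.
  have Ht' : ktrilinear (fun v w1 w2 : H => b (q.1 * S w2) (v * S w1)).
    split; [|split].
    - move=> w1 w2; exact: klin_comp (bil2 Hb _) (klin_mull _).
    - move=> v w2; exact: linS2.
    - move=> v w1; exact: linS1.
  apply: etrans (esym (coass Ht' q.2)) _.
  transitivity (\sum_(r <- D q.2) eps r.1 *: b (q.1 * S r.2) 1).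
    apply: eq_bigr => r _ /=.
    rewrite -(klin_sum (bil2 Hb (q.1 * S r.2)) _ (fun s => s.1 * S s.2)).
    by rewrite antR (klinZ (bil2 Hb _)).
  by rewrite (cou2f (f := fun y => b (q.1 * S y) 1)) //; apply: linS1.
rewrite -(klin_sum (bil1 Hb 1) _ (fun q => q.1 * S q.2)).
by rewrite antR (klinZ (bil1 Hb _)).
Qed.


Lemma antiD X (b : H -> H -> X) : kbilinear b -> forall h,
  \sum_(p <- D (S h)) b p.1 p.2 = \sum_(p <- D h) b (S p.2) (S p.1).
Proof.
move=> Hb h.
pose Q := fun y => \sum_(p <- D (S y)) b p.1 p.2.
have HQ : klinear Q := klin_comp (Dlin Hb) Slin.
pose V := fun x y z : H => \sum_(r <- D y) \sum_(s <- D z) \sum_(t <- D (S x))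
   b (t.1 * (r.1 * S s.2)) (t.2 * (r.2 * S s.1)).
have HV : ktrilinear V.
  split; [|split].
  - move=> y z; apply: klin_sumF => r; apply: klin_sumF => s.
    have HG : kbilinear (fun t1 t2 => b (t1 * (r.1 * S s.2)) (t2 * (r.2 * S s.1))).
      by split => w; [apply: klin_comp (bil1 Hb _) (klin_mull _)|apply: klin_comp (bil2 Hb _) (klin_mull _)].
    have HL := klin_comp (Dlin HG) Slin. exact: HL.
  - move=> x z.
    apply: (Dlin (G := fun r1 r2 => \sum_(s <- D z) \sum_(t <- D (S x))
        b (t.1 * (r1 * S s.2)) (t.2 * (r2 * S s.1)))).
    split => w; apply: klin_sumF => s; apply: klin_sumF => t.
      exact: klin_comp (bil1 Hb _) (klin_comp (klin_mulr _) (klin_mull _)).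
    exact: klin_comp (bil2 Hb _) (klin_comp (klin_mulr _) (klin_mull _)).
  - move=> x y; apply: klin_sumF => r.
    apply: (Dlin (G := fun s1 s2 => \sum_(t <- D (S x))
        b (t.1 * (r.1 * S s2)) (t.2 * (r.2 * S s1)))).
    split => w; apply: klin_sumF => t.
      exact: klin_comp (bil2 Hb _) (klin_comp (klin_mulr _) (klin_comp (klin_mulr _) Slin)).
    exact: klin_comp (bil1 Hb _) (klin_comp (klin_mulr _) (klin_comp (klin_mulr _) Slin)).
transitivity (Q h); first by [].
rewrite -(cou1f HQ h).
transitivity (\sum_(p <- D h) \sum_(q <- D p.2) V p.1 q.1 q.2).
  apply: eq_bigr => p _.
  pose b' := fun u v : H => \sum_(t <- D (S p.1)) b (t.1 * u) (t.2 * v).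
  have Hb' : kbilinear b'.
    split => w; apply: klin_sumF => t.
      exact: klin_comp (bil1 Hb _) (klin_mulr _).
    exact: klin_comp (bil2 Hb _) (klin_mulr _).
  have -> : Q p.1 = b' 1 1.
    by rewrite /Q /b'; apply: eq_bigr => t _; rewrite !mulr1.
  rewrite -(L2 Hb' p.2); apply: eq_bigr => q _; rewrite /V /b'.
  apply: eq_bigr => r _; apply: eq_bigr => s _; done.
rewrite -(coass HV h).
pose g := fun y => \sum_(s <- D y) b (S s.2) (S s.1).
have Hg : klinear g.
  apply: (Dlin (G := fun s1 s2 => b (S s2) (S s1))).
  by split => w; [apply: klin_comp (bil2 Hb _) Slin|apply: klin_comp (bil1 Hb _) Slin].
rewrite -[RHS]/(g h) -(cou2f Hg h).
apply: eq_bigr => p _.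
pose b'' := fun u v : H => \sum_(s <- D p.2) b (u * S s.2) (v * S s.1).
have Hb'' : kbilinear b''.
  split => w; apply: klin_sumF => s.
    exact: klin_comp (bil1 Hb _) (klin_mull _).
  exact: klin_comp (bil2 Hb _) (klin_mull _).
have -> : g p.2 = b'' 1 1.
  by rewrite /g /b''; apply: eq_bigr => s _; rewrite !mul1r.
rewrite -(L1 Hb'' p.1); apply: eq_bigr => q _; rewrite /V /b''.
under eq_bigr do rewrite exchange_big.
rewrite exchange_big; apply: eq_bigr => t _; apply: eq_bigr => r _.
by apply: eq_bigr => s _; rewrite !mulrA.
Qed.

Lemma anti3 (T : H -> H) : klinear T ->
  (forall X (b : H -> H -> X), kbilinear b -> forall h,
     \sum_(p <- D (T h)) b p.1 p.2 = \sum_(p <- D h) b (T p.2) (T p.1)) ->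
  forall h, teq3 (D3 D (T h)) [seq (T q.2, T q.1.2, T q.1.1) | q <- D3 D h].
Proof.
move=> HT aT h M t [H1 [H2 H3]].
rewrite /D3 big_map !big_flatten /= big_map.
transitivity (\sum_(p <- D (T h)) \sum_(q <- D p.1) t q.1 q.2 p.2).
  by apply: eq_bigr => p _; rewrite big_map.
pose F := fun u v => \sum_(q <- D u) t q.1 q.2 v.
have HF : kbilinear F.
  split => w.
    by apply: (Dlin (G := fun q1 q2 => t q1 q2 w)); split => y; [apply: H1|apply: H2].
  by apply: klin_sumF => q; apply: H3.
rewrite -[LHS]/(\sum_(p <- D (T h)) F p.1 p.2) (aT _ _ HF h) /F.
transitivity (\sum_(p <- D h) \sum_(q <- D p.2) (fun x y z => t (T z) (T y) (T x)) p.1 q.1 q.2).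
  apply: eq_bigr => p _ /=.
  have Hc : kbilinear (fun a c => t a c (T p.1)).
    by split => y; [apply: H1|apply: H2].
  by rewrite (aT _ _ Hc).
have Ht' : ktrilinear (fun x y z => t (T z) (T y) (T x)).
  split; [|split] => ? ?.
  - exact: klin_comp (H3 _ _) HT.
  - exact: klin_comp (H2 _ _) HT.
  - exact: klin_comp (H1 _ _) HT.
apply: etrans (esym (coass Ht' h)) _.
by rewrite big_map; apply: eq_bigr => p _; rewrite big_map.
Qed.

Lemma epsS h : eps (S h) = eps h.
Proof.
case: hopf => _ _ _ _ [[el [em e1]] _].
have Hf : klinear (fun y => (eps (S y) : k^o)) := klin_comp el Slin.
rewrite -(cou1f Hf h).
have := congr1 eps (antL h); rewrite (klin_sum el) (klinZ el) /= e1.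
move=> e; rewrite -[RHS]mulr1 -[RHS]e.
by apply: eq_bigr => p _; rewrite em mulrC.
Qed.

Variable Sb : H -> H.
Hypotheses (SK : cancel S Sb) (SbK : cancel Sb S).

Lemma Sblin : klinear Sb.
Proof.
move=> a x y; apply: (can_inj SK).
by rewrite SbK Slin !SbK.
Qed.

Lemma antiDSb X (b : H -> H -> X) : kbilinear b -> forall h,
  \sum_(p <- D (Sb h)) b p.1 p.2 = \sum_(p <- D h) b (Sb p.2) (Sb p.1).
Proof.
move=> Hb h.
have Hb' : kbilinear (fun u v => b (Sb v) (Sb u)).
  by split => w; [apply: klin_comp (bil2 Hb _) Sblin|apply: klin_comp (bil1 Hb _) Sblin].
have := antiD Hb' (Sb h); rewrite SbK => ->.
by apply: eq_bigr => p _; rewrite !SK.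
Qed.

End Hopf.

Unset Implicit Arguments. Set Strict Implicit.

Theorem proposition2p1 (k : comNzRingType) (H : algType k)
  (D : H -> seq (H * H)) (eps : H -> k) (S Sb : H -> H)
  (hopfH : is_hopf D eps S) (SK : cancel S Sb) (SbK : cancel Sb S)
  (A : algType k) (rho : A -> seq (A * H))
  (comodA : is_comodule_algebra D eps rho) :
  (* gamma(f') = f' o S lands in C_A(i,j) *)
  (forall (i j : obj) (f' : H -> A), C'hom D rho Sb i j f' -> Chom D S rho i j (f' \o S)) /\
  (* gamma preserves composition *)
  (forall (i j l : obj) (f' g' : H -> A),
     C'hom D rho Sb i j f' -> C'hom D rho Sb j l g' ->
     forall h, (star D g' f' \o S) h = conv D (g' \o S) (f' \o S) h) /\
  (* gamma preserves identities *)
  (forall h, (idmor eps A \o S) h = idmor eps A h) /\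
  (* the inverse functor f |-> f o Sb lands in C'_A(i,j) *)
  (forall (i j : obj) (f : H -> A), Chom D S rho i j f -> C'hom D rho Sb i j (f \o Sb)) /\
  (* and the two are mutually inverse on morphisms *)
  (forall (i j : obj) (f : H -> A), Chom D S rho i j f -> forall h, ((f \o Sb) \o S) h = f h) /\
  (forall (i j : obj) (f' : H -> A), C'hom D rho Sb i j f' -> forall h, ((f' \o S) \o Sb) h = f' h).
Proof.
have Sl := Slin hopfH.
have Sbl := Sblin hopfH SK SbK.
have aS := antiD hopfH.
have aSb := antiDSb hopfH SK SbK.
have a3S := anti3 hopfH Sl aS.
have a3Sb := anti3 hopfH Sbl aSb.
split; [|split;[|split;[|split;[|split]]]].
- move=> i j f' [fl Hf]; split; first exact: klin_comp fl Sl.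
  case: i j Hf => [] [] Hf h M b Hb /=.
  + exact: Hf (S h) M b Hb.
  + rewrite (Hf (S h) M b Hb) !big_map.
    have Hb' : kbilinear (fun u v => b (f' u) v).
      by split => w; [apply: klin_comp (bil1 Hb _) fl|move=> ? ? ?; apply: (bil2 Hb)].
    exact: (aS _ _ Hb' h).
  + rewrite (Hf (S h) M b Hb) !big_map.
    have Hb' : kbilinear (fun u v => b (f' v) (Sb u)).
      by split => w; [apply: klin_comp (bil2 Hb _) Sbl|apply: klin_comp (bil1 Hb _) fl].
    apply: etrans (aS _ _ Hb' h) _; apply: eq_bigr => p _ /=; by rewrite SK.
  + rewrite (Hf (S h) M b Hb) !big_map.
    have Ht : ktrilinear (fun u v w => b (f' v) (w * Sb u)).
      split; [|split] => ? ?.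
      * exact: klin_comp (bil2 Hb _) (klin_comp (klin_mulr _) Sbl).
      * exact: klin_comp (bil1 Hb _) fl.
      * exact: klin_comp (bil2 Hb _) (klin_mull _).
    apply: etrans (a3S h M _ Ht) _; rewrite big_map; apply: eq_bigr => p _ /=; by rewrite SK.
- move=> i j l f' g' [fl _] [gl _] h /=; rewrite /star /conv.
  have Hb : kbilinear (fun u v => g' v * f' u).
    by split => w; [apply: klin_comp (klin_mulr _) fl|apply: klin_comp (klin_mull _) gl].
  exact: (aS _ _ Hb h).
- by move=> h; rewrite /idmor /= (epsS hopfH).
- move=> i j f [fl Hf]; split; first exact: klin_comp fl Sbl.
  case: i j Hf => [] [] Hf h M b Hb /=.
  + exact: Hf (Sb h) M b Hb.
  + rewrite (Hf (Sb h) M b Hb) !big_map.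
    have Hb' : kbilinear (fun u v => b (f v) (S u)).
      by split => w; [apply: klin_comp (bil2 Hb _) Sl|apply: klin_comp (bil1 Hb _) fl].
    apply: etrans (aSb _ _ Hb' h) _; apply: eq_bigr => p _ /=; by rewrite SbK.
  + rewrite (Hf (Sb h) M b Hb) !big_map.
    have Hb' : kbilinear (fun u v => b (f u) v).
      by split => w; [apply: klin_comp (bil1 Hb _) fl|move=> ? ? ?; apply: (bil2 Hb)].
    exact: (aSb _ _ Hb' h).
  + rewrite (Hf (Sb h) M b Hb) !big_map.
    have Ht : ktrilinear (fun u v w => b (f v) (S u * w)).
      split; [|split] => ? ?.
      * exact: klin_comp (bil2 Hb _) (klin_comp (klin_mull _) Sl).
      * exact: klin_comp (bil1 Hb _) fl.
      * exact: klin_comp (bil2 Hb _) (klin_mulr _).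
    apply: etrans (a3Sb h M _ Ht) _; rewrite big_map; apply: eq_bigr => p _ /=; by rewrite SbK.
- by move=> i j f _ h /=; rewrite SK.
- by move=> i j f _ h /=; rewrite SbK.
Qed.
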